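(* Let $\mathcal{E}=\{e_1,\dots,e_n\}$ be an orthonormal basis for $\mathbb{R}^n$, let $k\le[(n+1)/2]$ and let $u_1\in\mathbb{R}^n$ be a unit vector with $|\mathrm{supp}(u_1)|=k$. Then $u_1$ can be extended to an orthonormal set $\{u_1,\dots,u_k\}$ such that $M=\mathrm{span}\{u_1,\dots,u_k\}$ is a $k$-dimensional maximal $\mathcal{E}$-PR subspace.
   Context: $[a]$ is the integer part of $a$. For $x=\sum_{i=1}^n\alpha_ie_i$, $\mathrm{supp}(x)=\{i:\alpha_i\neq0\}$. A subspace $M$ is an $\mathcal{E}$-PR subspace if $\{P_Me_i\}_{i=1}^n$ (with $P_M$ the orthogonal projection onto $M$) spans $M$ and whenever $x,y\in M$ satisfy $|\langle x,P_Me_i\rangle|=|\langle y,P_Me_i\rangle|$ for all $i$, then $x=\pm y$. It is maximal if it is not a proper subspace of another $\mathcal{E}$-PR subspace. *)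

(* Defs.v *)
From HB Require Import structures.
From mathcomp Require Import all_boot all_order all_algebra.
From mathcomp Require Import reals.
Set Implicit Arguments. Unset Strict Implicit. Unset Printing Implicit Defensive.
Import Order.TTheory GRing.Theory Num.Theory.
Local Open Scope ring_scope.

Section Defs.
Variables (R : realType) (n : nat).

Definition dotv (x y : 'rV[R]_n) : R := (x *m y^T) 0 0.

(* An orthonormal basis E = {e_1..e_n} is given as the rows of E : 'M_n. *)
Definition orthonormal_basis (E : 'M[R]_n) : Prop := E *m E^T = 1%:M.

(* supp(x) w.r.t. E: x = sum_i alpha_i e_i with alpha_i = <x, e_i>. *)
Definition suppE (E : 'M[R]_n) (x : 'rV[R]_n) : {set 'I_n} :=
  [set i | dotv x (row i E) != 0].

(* A subspace M of R^n is represented (mxalgebra style) by a matrix M : 'M_(m, n)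
   whose row space is M. *)
Definition projmx (m : nat) (M : 'M[R]_(m, n)) : 'M[R]_n :=
  let B := row_base M in (B^T *m invmx (B *m B^T)) *m B.

Definition projv (m : nat) (M : 'M[R]_(m, n)) (x : 'rV[R]_n) : 'rV[R]_n := x *m projmx M.

Definition EPR (E : 'M[R]_n) (m : nat) (M : 'M[R]_(m, n)) : Prop :=
  ((\matrix_(i < n) projv M (row i E)) == M)%MS /\
  (forall x y : 'rV[R]_n, (x <= M)%MS -> (y <= M)%MS ->
     (forall i : 'I_n, `|dotv x (projv M (row i E))| = `|dotv y (projv M (row i E))|) ->
     x = y \/ x = - y).

Definition maximal_EPR (E : 'M[R]_n) (m : nat) (M : 'M[R]_(m, n)) : Prop :=
  EPR E M /\ forall (m' : nat) (M' : 'M[R]_(m', n)), EPR E M' -> ~ (M < M')%MS.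

End Defs.

(* Main.v *)
Require Import Defs.
From HB Require Import structures.
From mathcomp Require Import all_boot all_order all_algebra.
From mathcomp Require Import reals.
From mathcomp Require Import zify ring lra.
Set Implicit Arguments. Unset Strict Implicit. Unset Printing Implicit Defensive.
Import Order.TTheory GRing.Theory Num.Theory.
Local Open Scope ring_scope.

Section GS.
Variables (R : realType) (n : nat).

Lemma sumsq0 (v : 'rV[R]_n) : (v *m v^T) 0 0 = 0 -> v = 0.
Proof.
rewrite mxE => H; apply/rowP => i; rewrite mxE.
have nn : forall j : 'I_n, true -> 0 <= v 0 j * v^T j 0.
  by move=> j _; rewrite mxE -expr2 sqr_ge0.
have := psumr_eq0P nn H (i:=i) isT.
by rewrite mxE => /eqP; rewrite mulf_eq0 orbb => /eqP.
Qed.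

Lemma sumsq_ge0 (v : 'rV[R]_n) : 0 <= (v *m v^T) 0 0.
Proof. by rewrite mxE; apply: sumr_ge0 => j _; rewrite mxE -expr2 sqr_ge0. Qed.

Lemma GSlem m : forall q (Q : 'M[R]_(q, n)) (G : 'M_(m, n)), Q *m Q^T = 1%:M ->
  exists r (W : 'M[R]_(r, n)),
    [/\ W *m W^T = 1%:M, W *m Q^T = 0 & (col_mx Q W == col_mx Q G)%MS].
Proof.
elim: m => [|m IH] q Q; last first.
  rewrite -add1n => G QQ.
have -> : G = col_mx (usubmx G) (dsubmx G) by rewrite vsubmxK.
set h := usubmx _; set G2 := dsubmx _.
set h' := h - h *m Q^T *m Q.
have h'Q : h' *m Q^T = 0.
  by rewrite /h' mulmxBl -!mulmxA QQ mulmx1 subrr.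
have hsub : (h <= Q + h')%MS.
  have -> : h = h *m Q^T *m Q + h' by rewrite /h' addrC subrK.
  by apply: addmx_sub_adds; [apply: submxMl | apply: submx_refl].
have h'sub : (h' <= Q + h)%MS.
  rewrite /h' addrC; apply: addmx_sub_adds; last exact: submx_refl.
  by rewrite (eqmx_opp (h *m Q^T *m Q)) submxMl.
have colE m1 m2 m3 (A : 'M[R]_(m1,n)) (X : 'M_(m2,n)) (Y : 'M_(m3,n)) :
    (A <= col_mx X Y)%MS = (A <= X + Y)%MS by rewrite addsmxE.
have subL m1 m2 m3 (A : 'M[R]_(m1,n)) (X : 'M_(m2,n)) (Y : 'M_(m3,n)) :
    (A <= X)%MS -> (A <= X + Y)%MS by move=> s; apply: submx_trans s (addsmxSl _ _).
have subR m1 m2 m3 (A : 'M[R]_(m1,n)) (X : 'M_(m2,n)) (Y : 'M_(m3,n)) :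
    (A <= Y)%MS -> (A <= X + Y)%MS by move=> s; apply: submx_trans s (addsmxSr _ _).
have colE2 m1 m2 m4 (A : 'M[R]_(m1,n)) (X : 'M_(m2,n)) (Y : 'rV_n) (Z : 'M_(m4,n)) :
    (A <= X + (col_mx Y Z : 'M_(m4.+1, n)))%MS = (A <= X + (Y + Z))%MS.
  by rewrite (adds_eqmx (eqmx_refl X) (addsmxE Y Z)).
have [h'0|h'n0] := eqVneq h' 0.
  have [r [W [WW WQ eqW]]] := IH q Q G2 QQ.
  have [s1 s2] : (W <= Q + G2)%MS /\ (G2 <= Q + W)%MS.
    by move: eqW => /andP[]; rewrite !col_mx_sub !colE => /andP[_ ->] /andP[_ ->].
  exists r, W; split => //.
  have hQ : (h <= Q)%MS.
    have e : h = h *m Q^T *m Q by apply/eqP; rewrite -subr_eq0 -/h' h'0.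
    by rewrite e submxMl.
  apply/andP; split; rewrite !col_mx_sub !colE ?colE2 ?addsmxSl //=.
    by apply: submx_trans s1 _; apply: addsmxS (submx_refl _) (addsmxSr _ _).
  apply/andP; split; first by apply: (subL).
  exact: s2.
have hpos : 0 < (h' *m h'^T) 0 0.
  rewrite lt_def sumsq_ge0 andbT; apply/eqP => /sumsq0 h'0.
  by rewrite h'0 eqxx in h'n0.
set nn := Num.sqrt ((h' *m h'^T) 0 0).
have nnpos : 0 < nn by rewrite sqrtr_gt0.
set h'' := nn^-1 *: h'.
have hh : h'' *m h''^T = 1%:M.
  have e2 : nn ^+ 2 = (h' *m h'^T) 0 0 by rewrite sqr_sqrtr // ltW.
  apply/matrixP => i j; rewrite !ord1 /h'' linearZ /= -scalemxAl -scalemxAr.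
  rewrite [LHS]mxE [X in _ * X]mxE -e2 [RHS]mxE /=.
  by rewrite mulrA -expr2 -exprMn mulVf ?expr1n // gt_eqF.
have h''Q : h'' *m Q^T = 0 by rewrite /h'' -scalemxAl h'Q scaler0.
set Q' := col_mx Q h''.
have QQ' : Q' *m Q'^T = 1%:M.
  rewrite /Q' tr_col_mx mul_col_mx !mul_mx_row QQ hh h''Q.
  have -> : Q *m h''^T = 0 by rewrite -(trmxK Q) -trmx_mul h''Q trmx0.
  by rewrite -block_mxEv -scalar_mx_block.
have [r [W2 [WW WQ' eqW]]] := IH _ Q' G2 QQ'.
move: WQ'; rewrite /Q' tr_col_mx mul_mx_row => /eqP; rewrite row_mx_eq0.
move=> /andP[/eqP W2Q /eqP W2h].
exists (1 + r)%N, (col_mx h'' W2); split.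
- rewrite tr_col_mx mul_col_mx !mul_mx_row hh WW W2h.
  have -> : h'' *m W2^T = 0 by rewrite -(trmxK h'') -trmx_mul W2h trmx0.
  by rewrite -block_mxEv -scalar_mx_block.
- by rewrite mul_col_mx h''Q W2Q col_mx0.
have h''sub : (h'' <= Q + h)%MS by apply: scalemx_sub.
have h'sub' : (h' <= h'')%MS.
  have -> : h' = nn *: h'' by rewrite /h'' scalerA mulfV ?scale1r // gt_eqF.
  exact: scalemx_sub (submx_refl _).
have [s1 s2] : (W2 <= Q + h'' + G2)%MS /\ (G2 <= Q + h'' + W2)%MS.
  have colE3 m1 m3 (A : 'M[R]_(m1,n)) (Y : 'M_(m3,n)) : (A <= Q' + Y)%MS = (A <= Q + h'' + Y)%MS.
    by rewrite (adds_eqmx (addsmxE Q h'') (eqmx_refl Y)).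
  by move: eqW => /andP[]; rewrite !col_mx_sub !colE !colE3 => /andP[_ ->] /andP[_ ->].
have S2 : (Q + h'' + G2 <= Q + (h + G2))%MS.
  rewrite !addsmx_sub addsmxSl /=; apply/andP; split; last first.
    apply: (subR). apply: (subR). exact: submx_refl.
  by apply: submx_trans h''sub _; apply: addsmxS (submx_refl _) (addsmxSl _ _).
have S1 : (Q + h <= Q + (h'' + W2))%MS.
  rewrite !addsmx_sub addsmxSl /=.
  apply: submx_trans hsub _; rewrite addsmx_sub addsmxSl /=.
  by apply: submx_trans h'sub' _; apply: (subR); apply: (subL).
apply/andP; split; rewrite !col_mx_sub !colE !colE2 addsmxSl /=.
  apply/andP; split.
    by apply: submx_trans h''sub _; apply: addsmxS (submx_refl _) (addsmxSl _ _).
  exact: submx_trans s1 S2.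
apply/andP; split.
  by apply: submx_trans S1; apply: (subR).
apply: submx_trans s2 _; rewrite !addsmx_sub; apply/andP; split; last by apply: (subR); apply: (subR).
by rewrite addsmxSl /=; apply: (subR); apply: (subL); exact: submx_refl.
move=> G QQ; exists 0%N, G; split.
- by apply/matrixP => [[]].
- by apply/matrixP => [[]].
- by apply/eqmxP; exact: eqmx_refl.
Qed.
End GS.

Section P.
Variables (R : realType) (n : nat).
Lemma gram_unit m (B : 'M[R]_(m, n)) : row_free B -> (B *m B^T) \in unitmx.
Proof.
move=> fB; rewrite -row_free_unit -kermx_eq0; apply/rowV0P => v /sub_kermxP H.
have : (v *m B) *m (v *m B)^T = 0.
  by rewrite trmx_mul mulmxA -(mulmxA v) H mul0mx.
move=> /(congr1 (fun A : 'M_1 => A 0 0)); rewrite [X in _ = X]mxE => /sumsq0 /eqP.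
by rewrite mulmx_free_eq0 // => /eqP.
Qed.

Variables (m : nat) (M : 'M[R]_(m, n)).


Lemma proj_tr_gen k (B : 'M[R]_(k, n)) :
  (B^T *m invmx (B *m B^T) *m B)^T = B^T *m invmx (B *m B^T) *m B.
Proof. by rewrite !trmx_mul trmxK trmx_inv trmx_mul trmxK mulmxA. Qed.

Lemma projmx_tr : (projmx M)^T = projmx M.
Proof. exact: proj_tr_gen. Qed.

Lemma proj_id_gen k p (B : 'M[R]_(k, n)) (D : 'M_(p, k)) : row_free B ->
  D *m B *m (B^T *m invmx (B *m B^T) *m B) = D *m B.
Proof.
move=> fB; rewrite !mulmxA -(mulmxA D B) -(mulmxA D (B *m B^T)) mulmxV ?mulmx1 //.
exact: gram_unit.
Qed.

Lemma projmx_id p (x : 'M[R]_(p, n)) : (x <= M)%MS -> x *m projmx M = x.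
Proof.
rewrite -(eq_row_base M) => /submxP [D ->].
exact/proj_id_gen/row_base_free.
Qed.

Lemma projmx_sub : (projmx M <= M)%MS.
Proof. rewrite /projmx /=; apply: submx_trans (submxMl _ _) _; by rewrite eq_row_base. Qed.

Lemma dot_proj (E : 'M[R]_n) x i : (x <= M)%MS ->
  dotv x (Defs.projv M (row i E)) = dotv x (row i E).
Proof.
move=> xM; rewrite /dotv /Defs.projv trmx_mul projmx_tr mulmxA projmx_id //.
Qed.

Lemma span_proj (E : 'M[R]_n) : orthonormal_basis E ->
  ((\matrix_(i < n) Defs.projv M (row i E)) == M)%MS.
Proof.
move=> oE.
have -> : \matrix_(i < n) Defs.projv M (row i E) = E *m projmx M.
  by apply/row_matrixP => i; rewrite rowK row_mul.
have EE : E^T *m E = 1%:M by apply: mulmx1C.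
apply/andP; split; first exact: submx_trans (submxMl _ _) projmx_sub.
rewrite -{1}(eq_row_base M).
have -> : row_base M = (row_base M *m E^T) *m (E *m projmx M).
  by rewrite mulmxA -(mulmxA _ E^T) EE mulmx1 projmx_id // eq_row_base.
exact: submxMl.
Qed.
End P.

Section RS.
Variables (R : realType) (n k' : nat) (T S : {set 'I_n}) (c : 'rV[R]_n).
Hypotheses (cT : #|T| = k'.+1) (cS : #|S| = k') (ST : S \subset ~: T)
  (Tdef : forall i, (i \in T) = (c 0 i != 0)).

Definition lam (i : 'I_n) : R := (i : nat)%:R.
Lemma lam_inj : injective lam.
Proof. by move=> i j /eqP; rewrite /lam eqr_nat => /eqP /val_inj. Qed.

Definition p0 : {poly R} := \prod_(x <- [seq lam s | s <- enum S]) ('X - x%:P).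
Lemma size_p0 : size p0 = k'.+1.
Proof. by rewrite /p0 size_prod_XsubC size_map -cardE cS. Qed.

Lemma root_p0 i : root p0 (lam i) = (i \in S).
Proof. by rewrite /p0 root_prod_XsubC (mem_map lam_inj) mem_enum. Qed.

Definition D := T :|: S.
Lemma card_D : #|D| = (k' + k'.+1)%N.
Proof.
rewrite /D cardsU cT cS.
have -> : T :&: S = set0.
  apply/setP => i; rewrite !inE; apply/negbTE/negP => /andP[iT iS].
  by move/subsetP: ST => /(_ i iS); rewrite inE iT.
by rewrite cards0 subn0 addnC.
Qed.

Definition mult (i : 'I_n) : R := if i \in T then c 0 i / p0.[lam i] else 1.
Lemma mult_neq0 i : mult i != 0.
Proof.
rewrite /mult; case: ifP => iT; last exact: oner_neq0.
rewrite mulf_neq0 ?invr_eq0 -?Tdef //.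
have : i \notin S by apply/negP => iS; move/subsetP: ST => /(_ i iS); rewrite inE iT.
by rewrite -root_p0.
Qed.

Definition ev (q : {poly R}) : 'rV[R]_n :=
  \row_i (if i \in D then mult i * q.[lam i] else 0).

Lemma c_ev : c = ev p0.
Proof.
apply/rowP => i; rewrite /ev mxE /D inE.
case: (boolP (i \in T)) => iT /=.
  rewrite /mult iT divfK //.
  have : i \notin S by apply/negP => iS; move/subsetP: ST => /(_ i iS); rewrite inE iT.
  by rewrite -root_p0.
have : c 0 i == 0 by rewrite -[_ == 0]negbK -Tdef.
move=> /eqP ->; case: ifP => // iS.
have /eqP -> : root p0 (lam i) by rewrite root_p0.
by rewrite mulr0.
Qed.

Lemma ev_root0 (q : {poly R}) : (size q <= k'.+1)%N -> ev q = 0 -> q = 0.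
Proof.
move=> sq eq0; apply/eqP/negP => /negP qn0.
have := max_poly_roots qn0 (rs := [seq lam i | i <- enum D]).
rewrite (map_inj_uniq lam_inj) enum_uniq size_map -cardE card_D.
have -> : all (root q) [seq lam i | i <- enum D].
  apply/allP => x /mapP [i]; rewrite mem_enum => iD ->.
  move/rowP: eq0 => /(_ i); rewrite !mxE iD => /eqP.
  by rewrite mulf_eq0 (negbTE (mult_neq0 i)).
move=> /(_ isT isT) H.
by move: (leq_trans H sq); lia.
Qed.

Lemma ev_disj (p q : {poly R}) : (size p <= k'.+1)%N -> (size q <= k'.+1)%N ->
  (forall i, ev p 0 i * ev q 0 i = 0) -> ev p = 0 \/ ev q = 0.
Proof.
move=> sp sq H.
have [->|pn0] := eqVneq p 0.
  by left; apply/rowP => i; rewrite !mxE horner0 mulr0; case: ifP.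
have [->|qn0] := eqVneq q 0.
  by right; apply/rowP => i; rewrite !mxE horner0 mulr0; case: ifP.
have pqn0 : p * q != 0 by rewrite mulf_neq0.
have := max_poly_roots pqn0 (rs := [seq lam i | i <- enum D]).
rewrite (map_inj_uniq lam_inj) enum_uniq size_map -cardE card_D.
have -> : all (root (p * q)) [seq lam i | i <- enum D].
  apply/allP => x /mapP [i]; rewrite mem_enum => iD ->.
  move: (H i); rewrite !mxE iD => /eqP.
  rewrite /root hornerM mulrACA mulf_eq0 mulf_eq0 (negbTE (mult_neq0 i)) /=.
  by [].
move=> /(_ isT isT) H2.
have := leq_trans H2 (size_polyMleq p q).
have : (size p + size q <= k'.+1 + k'.+1)%N by apply: leq_add.
have : (0 < size p)%N by rewrite size_poly_gt0.
have : (0 < size q)%N by rewrite size_poly_gt0.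
lia.
Qed.

Definition Gt : 'M[R]_(k'.+1, n) := \matrix_(j < k'.+1, i < n) ev 'X^j 0 i.
Definition pa (a : 'rV[R]_k'.+1) : {poly R} := \poly_(j < k'.+1) a 0 (inord j).

Lemma size_pa a : (size (pa a) <= k'.+1)%N.
Proof. exact: size_poly. Qed.

Lemma ev_mul a : a *m Gt = ev (pa a).
Proof.
apply/rowP => i; rewrite !mxE /pa horner_poly.
case: ifP => iD.
  rewrite mulr_sumr; apply: eq_bigr => j _; rewrite !mxE iD inord_val hornerXn.
  by rewrite mulrCA.
by rewrite big1 // => j _; rewrite !mxE iD mulr0.
Qed.

Lemma Gt_free : row_free Gt.
Proof.
rewrite -kermx_eq0; apply/rowV0P => v /sub_kermxP.
rewrite ev_mul => /(ev_root0 (size_pa v)) pv0.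
apply/rowP => j; move/polyP: pv0 => /(_ j); rewrite coef_poly ltn_ord inord_val.
by rewrite coef0 mxE.
Qed.

Lemma c_in : exists a, c = a *m Gt.
Proof.
exists (\row_(j < k'.+1) p0`_j); rewrite ev_mul c_ev; congr ev.
apply/polyP => j; rewrite coef_poly; case: ifP => jk.
  by rewrite mxE inordK.
by rewrite nth_default // size_p0 leqNgt jk.
Qed.
End RS.

Theorem theorem4p3 (R : realType) (n k : nat) (E : 'M[R]_n) (u1 : 'rV[R]_n) :
  orthonormal_basis E ->
  (k <= (n + 1) %/ 2)%N ->
  dotv u1 u1 = 1 ->
  #|suppE E u1| = k ->
  exists U : 'M[R]_(k, n),
    [/\ U *m U^T = 1%:M,
        exists i : 'I_k, row i U = u1,
        \rank U = k &
        maximal_EPR E U].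
Proof.
move=> oE hk hu hs.
have EE : E^T *m E = 1%:M := mulmx1C oE.
have dotE x i : dotv x (row i E) = (x *m E^T) 0 i.
  by rewrite /dotv tr_row !mxE; apply: eq_bigr => j _; rewrite !mxE.
set c := u1 *m E^T.
have u1c : u1 = c *m E by rewrite /c -mulmxA EE mulmx1.
set T := suppE E u1.
have Tdef i : (i \in T) = (c 0 i != 0) by rewrite /T /suppE inE dotE.
have k_gt0 : (0 < k)%N.
  case: (posnP k) => // k0; exfalso.
  have T0 : T = set0 by apply/cards0_eq; rewrite /T hs.
  have c0 : c = 0.
    apply/rowP => i; rewrite [RHS]mxE; apply/eqP; rewrite -[_ == 0]negbK -Tdef T0 inE //.
  by move: hu; rewrite u1c c0 mul0mx /dotv mul0mx mxE => /esym/eqP; rewrite oner_eq0.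
case: k hk hs k_gt0 => [//|k'] hk hs _.
have [S [ST cS]] : exists S : {set 'I_n}, S \subset ~: T /\ #|S| = k'.
  have hC : (k' <= #|~: T|)%N.
    have := cardsC T; rewrite card_ord /T hs => hn.
    have : (k'.+1 * 2 <= n + 1)%N by rewrite -leq_divRL.
    lia.
  exists [set x in take k' (enum (~: T))]; split.
    by apply/subsetP => x; rewrite inE => /mem_take; rewrite mem_enum.
  rewrite cardsE; move/card_uniqP: (take_uniq k' (enum_uniq (mem (~: T)))) => ->.
  by rewrite size_takel // -cardE.
set G0 := Gt k' T S c *m E.
have Efree : row_free E by rewrite row_free_unit; case: (mulmx1_unit oE).
have u1G : (u1 <= G0)%MS.
  have [a ca] := c_in cS ST Tdef.
  by rewrite u1c ca /G0 -mulmxA submxMl.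
have uu : u1 *m u1^T = 1%:M.
  by apply/matrixP => i j; rewrite !ord1 [RHS]mxE eqxx; exact: hu.
have [r [W [WW Wu eqW]]] := GSlem G0 uu.
set U := col_mx u1 W.
have UU : U *m U^T = 1%:M.
  rewrite /U tr_col_mx mul_col_mx !mul_mx_row uu WW Wu.
  have -> : u1 *m W^T = 0 by rewrite -(trmxK u1) -trmx_mul Wu trmx0.
  by rewrite -block_mxEv -scalar_mx_block.
have UG : (U <= G0)%MS.
  move: eqW => /andP [s1 _]; apply: submx_trans s1 _.
  by rewrite col_mx_sub u1G submx_refl.
have GU : (G0 <= U)%MS.
  move: eqW => /andP [_ s2]; apply: submx_trans s2.
  by rewrite -addsmxE addsmxSr.
have rU : \rank U = (1 + r)%N.
  apply/eqP; rewrite eqn_leq rank_leq_row /=.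
  by rewrite -{1}(mxrank1 R (1 + r)) -UU mxrankM_maxl.
have rG : \rank G0 = k'.+1.
  by rewrite /G0 mxrankMfree //; apply/eqP; exact: (Gt_free hs cS ST Tdef).
have rk : (1 + r)%N = k'.+1.
  by rewrite -rU -rG; apply: eqmx_rank; apply/andP; split.
have r_eq : r = k' by move: rk; rewrite add1n => -[].
subst r.
exists U; split => //.
  exists (lshift k' (0 : 'I_1)).
  apply: etrans (rowKu (0 : 'I_1) u1 W) _.
  by apply/rowP => j; rewrite mxE.
have entD (A B : 'rV[R]_n) i : (A + B) 0 i = A 0 i + B 0 i by rewrite mxE.
have entN (A : 'rV[R]_n) i : (- A) 0 i = - A 0 i by rewrite mxE.
have xE (z : 'rV[R]_n) : z = (z *m E^T) *m E by rewrite -mulmxA EE mulmx1.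
have u1U : (u1 <= U)%MS by rewrite /U -addsmxE addsmxSl.
have UG' : ((U : 'M_(k'.+1, n)) <= G0)%MS := UG.
have u1U' : (u1 <= (U : 'M_(k'.+1, n)))%MS := u1U.
have rU' : \rank (U : 'M_(k'.+1, n)) = k'.+1 := rU.
clear UG u1U rU.
split.
  split; first exact: span_proj.
  move=> x y xU yU H.
  have H2 i : ((x + y) *m E^T) 0 i * ((x - y) *m E^T) 0 i = 0.
    move: (H i); rewrite !dot_proj // !dotE => h.
    rewrite mulmxDl mulmxBl entD entD entN.
    set a := (x *m E^T) 0 i; set b := (y *m E^T) 0 i.
    have sq : a ^+ 2 = b ^+ 2.
      by rewrite -(real_normK (num_real a)) -(real_normK (num_real b)) h.
    by rewrite mulrC -subr_sqr sq subrr.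
  have sU1 : ((x + y)%R <= G0)%MS by exact: submx_trans (addmx_sub xU yU) UG'.
  have nyU : ((- y)%R <= U)%MS by rewrite eqmx_opp.
  have sU2 : ((x - y)%R <= G0)%MS by exact: submx_trans (addmx_sub xU nyU) UG'.
  have [D1 eD1] := submxP sU1.
  have [D2 eD2] := submxP sU2.
  have e1 : (x + y) *m E^T = ev T S c (pa D1).
    by rewrite eD1 /G0 !mulmxA -(mulmxA _ E) oE mulmx1 ev_mul.
  have e2 : (x - y) *m E^T = ev T S c (pa D2).
    by rewrite eD2 /G0 !mulmxA -(mulmxA _ E) oE mulmx1 ev_mul.
  case: (ev_disj hs cS ST Tdef (size_pa D1) (size_pa D2)).
  - by move=> i; rewrite -e1 -e2; exact: H2.
  - move=> h0; right.
    have : x + y = 0 by rewrite (xE (x + y)) e1 h0 mul0mx.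
    by move/eqP; rewrite addr_eq0 => /eqP.
  - move=> h0; left.
    have : x - y = 0 by rewrite (xE (x - y)) e2 h0 mul0mx.
    by move/eqP; rewrite subr_eq0 => /eqP.
move=> m' M' [span' PR'] ltUM.
have rM : (k'.+1 < \rank M')%N by have := rank_ltmx ltUM; rewrite rU'.
set B' := row_base M'.
set X : 'M[R]_(n, #|T|) := \matrix_(i < n, j < #|T|) ((i == enum_val j)%:R).
set C := B' *m (E^T *m X).
have cardT : #|T| = k'.+1 := hs.
have nf : ~~ row_free C.
  rewrite /row_free; apply/negP => /eqP h.
  by have := rank_leq_col C; rewrite h cardT; lia.
have [a aK an0] : exists2 a : 'rV_(\rank M'), (a <= kermx C)%MS & a != 0.
  by apply/rowV0Pn; rewrite kermx_eq0.
have aC : a *m C = 0 by apply/sub_kermxP.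
set w := a *m B'.
have wn0 : w != 0 by rewrite /w mulmx_free_eq0 // row_base_free.
have wM : (w <= M')%MS.
  by rewrite /w; apply: submx_trans (submxMl _ _) _; rewrite eq_row_base.
have wT i : i \in T -> (w *m E^T) 0 i = 0.
  move=> iT.
  have e : w *m E^T *m X = 0.
    by rewrite /w -mulmxA -mulmxA; exact: aC.
  move/rowP: e => /(_ (enum_rank_in iT i)).
  rewrite mxE (bigD1 (enum_val (enum_rank_in iT i))) //= big1 ?addr0.
    by rewrite /X [in X in _ * X]mxE eqxx mulr1 enum_rankK_in // [RHS]mxE.
  by move=> l /negbTE nl; rewrite /X [in X in _ * X]mxE nl mulr0.
have u1M : (u1 <= M')%MS by apply: submx_trans u1U' (ltmxW ltUM).
have xM : ((u1 + w)%R <= M')%MS by apply: addmx_sub.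
have yM : ((u1 - w)%R <= M')%MS by apply: addmx_sub => //; rewrite eqmx_opp.
case: (PR' (u1 + w) (u1 - w) xM yM).
- move=> i; rewrite !dot_proj // !dotE mulmxDl mulmxBl !entD !entN.
  case: (boolP (i \in T)) => iT; first by rewrite wT // subr0 addr0.
  have : c 0 i = 0 by apply/eqP; rewrite -[_ == 0]negbK -Tdef.
  by rewrite /c => ->; rewrite add0r sub0r normrN.
- move=> h; move/negP: wn0; apply; apply/eqP/rowP => j.
  have := congr1 (fun v : 'rV[R]_n => v 0 j) h; rewrite /= !entD !entN !mxE.
  lra.
- move=> h; move: hu.
  have -> : u1 = 0.
    apply/rowP => j.
    have := congr1 (fun v : 'rV[R]_n => v 0 j) h; rewrite /= entN !entD !entN !mxE.
    lra.
  by rewrite /dotv mul0mx mxE => /esym/eqP; rewrite oner_eq0.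
Qed.
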